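(* Let $\mathbf{X}=\mathbf{D}_1\boldsymbol{\Gamma}_1$ with $\boldsymbol{\Gamma}_1\neq 0$, and $\mathbf{Y}=\mathbf{X}+\mathbf{E}$ with $\|\mathbf{E}\|_{2,\infty}^{p}\le\epsilon_0$. Let $|\Gamma_1^{\min}|$ and $|\Gamma_1^{\max}|$ be the smallest and largest absolute values of the nonzero entries of $\boldsymbol{\Gamma}_1$. Let $\hat{\boldsymbol{\Gamma}}_1=\mathcal{H}_{\beta_1}(\mathbf{D}_1^T\mathbf{Y})$. Assume (a) $\|\boldsymbol{\Gamma}_1\|_{0,\infty}^{s}<\tfrac12\Big(1+\tfrac{1}{\mu(\mathbf{D}_1)}\tfrac{|\Gamma_1^{\min}|}{|\Gamma_1^{\max}|}\Big)-\tfrac{1}{\mu(\mathbf{D}_1)}\tfrac{\epsilon_0}{|\Gamma_1^{\max}|}$; and (b) $|\Gamma_1^{\min}|-(\|\boldsymbol{\Gamma}_1\|_{0,\infty}^{s}-1)\mu(\mathbf{D}_1)|\Gamma_1^{\max}|-\epsilon_0>\beta_1>\|\boldsymbol{\Gamma}_1\|_{0,\infty}^{s}\mu(\mathbf{D}_1)|\Gamma_1^{\max}|+\epsilon_0$. Then (1) the support of $\hat{\boldsymbol{\Gamma}}_1$ equals the support of $\boldsymbol{\Gamma}_1$; and (2) $\|\boldsymbol{\Gamma}_1-\hat{\boldsymbol{\Gamma}}_1\|_{2,\infty}^{p}\le\sqrt{\|\boldsymbol{\Gamma}_1\|_{0,\infty}^{p}}\,\big(\epsilon_0+\mu(\mathb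f{D}_1)(\|\boldsymbol{\Gamma}_1\|_{0,\infty}^{s}-1)|\Gamma_1^{\max}|\big)$.
   Context: Setting. Signals are one-dimensional of length $N$ with periodic boundary conditions; $m_0=1$, $\boldsymbol{\Gamma}_0=\mathbf{X}$. For $i\ge1$, $\boldsymbol{\Gamma}_i\in\mathbb{R}^{Nm_i}$ has entry $km_i+r$ equal to the coefficient of filter $r$ at spatial shift $k$. $\mathbf{D}_i\in\mathbb{R}^{Nm_{i-1}\times Nm_i}$ is a (stride) convolutional dictionary whose column $km_i+r$ is local filter $r$ (length $n_{i-1}m_{i-1}$) placed cyclically on entries $km_{i-1},\dots,km_{i-1}+n_{i-1}m_{i-1}-1$, zero elsewhere; in particular $\mathbf{D}_1\in\mathbb{R}^{N\times Nm_1}$ consists of all cyclic shifts of $m_1$ filters of length $n_0$. Columns have unit $\ell_2$ norm; $\mu(\mathbf{D})=\max_{i\neq j}|\mathbf{d}_i^T\mathbf{d}_j|$. Stripes: $\mathbf{S}_{i,j}\boldsymbol{\Gamma}_i$ is the subvector of $\boldsymbol{\Gamma}_i$ at spatial shifts $k\in\{j-n_{i-1}+1,\dots,j+n_{i-1}-1\}$ (mod $N$), all channels (length $(2n_{i-1}-1)m_i$); $\|\boldsymbol{\Gamma}_i\|_{0,\infty}^{s}=\max_j\|\mathbf{S}_{i,j}\boldsymbol{\Gamma}_i\|_0$. Patches: for $i\ge0$, $\mathbf{P}_{i,j}\mathbf{V}$ extracts from $\mathbf{V}\in\mathbb{R}^{Nm_i}$ the cyclically contiguous subvector of length $n_im_i$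 at spatial shifts $j,\dots,j+n_i-1$ (all channels). $\|\mathbf{V}\|_{2,\infty}^{p}=\max_j\|\mathbf{P}_{i,j}\mathbf{V}\|_2$ and $\|\mathbf{V}\|_{0,\infty}^{p}=\max_j\|\mathbf{P}_{i,j}\mathbf{V}\|_0$ (for $\mathbf{E}\in\mathbb{R}^N$ patches have length $n_0$; for $\boldsymbol{\Gamma}_1$ they have length $n_1m_1$). Hard thresholding: $\mathcal{H}_\beta$ acts entrywise, $\mathcal{H}_\beta(z)=z$ if $|z|>\beta$ and $0$ otherwise. *)

(* Defs.v *)
From HB Require Import structures.
From mathcomp Require Import all_boot all_order all_algebra.
Set Implicit Arguments. Unset Strict Implicit. Unset Printing Implicit Defensive.
Import Order.TTheory GRing.Theory Num.Theory.
Local Open Scope ring_scope.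

Section Defs.
Variable R : rcfType.

Definition cyc_off (N k i : nat) : nat := ((i + N - k) %% N)%N.

(* D (N x N*m1) is a convolutional dictionary: column k*m1+r is filter r
   (length n0, taps h r t, t < n0) placed cyclically on entries k,...,k+n0-1. *)
Definition conv_dict (N m1 n0 : nat) (D : 'M[R]_(N, N * m1)) : Prop :=
  exists h : nat -> nat -> R, forall (i : 'I_N) (c : 'I_(N * m1)),
    D i c = if (cyc_off N (c %/ m1) i < n0)%N
            then h (c %% m1)%N (cyc_off N (c %/ m1) i) else 0.

Definition unit_cols n m (D : 'M[R]_(n, m)) : Prop :=
  forall c : 'I_m, \sum_(i < n) D i c ^+ 2 = 1.

Definition mutual_coh n m (D : 'M[R]_(n, m)) : R :=
  \big[Num.max/0]_(c < m) \big[Num.max/0]_(c' < m | c' != c)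
     `|\sum_(i < n) D i c * D i c'|.

(* shift k lies in the stripe centred at j : k in {j-n0+1,...,j+n0-1} mod N *)
Definition in_stripe (N n0 j k : nat) : bool :=
  (cyc_off N j k < n0)%N || (cyc_off N k j < n0)%N.

(* ||G||_{0,inf}^s  (stripes of layer 1, entry c has shift c %/ m1) *)
Definition stripe_l0inf (N m1 n0 : nat) (G : 'cV[R]_(N * m1)) : nat :=
  \big[maxn/0%N]_(j < N)
     #|[set c : 'I_(N * m1) | (G c 0 != 0) && in_stripe N n0 j (c %/ m1)]|.

(* patch j of a vector in R^{N m}: shifts j,...,j+n-1 (mod N), all channels *)
Definition patch_l0inf (N m n : nat) (V : 'cV[R]_(N * m)) : nat :=
  \big[maxn/0%N]_(j < N)
     #|[set c : 'I_(N * m) | (V c 0 != 0) && (cyc_off N j (c %/ m) < n)%N]|.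

Definition patch_l2inf (N m n : nat) (V : 'cV[R]_(N * m)) : R :=
  \big[Num.max/0]_(j < N)
     Num.sqrt (\sum_(c < N * m | (cyc_off N j (c %/ m) < n)%N) V c 0 ^+ 2).

Definition signal_patch_l2inf (N n0 : nat) (E : 'cV[R]_N) : R :=
  \big[Num.max/0]_(j < N)
     Num.sqrt (\sum_(i < N | (cyc_off N j i < n0)%N) E i 0 ^+ 2).

Definition hard_thr (b z : R) : R := if b < `|z| then z else 0.

Definition supp n (G : 'cV[R]_n) : {set 'I_n} := [set c | G c 0 != 0].

Definition abs_max n (G : 'cV[R]_n) : R :=
  \big[Num.max/0]_(c < n | G c 0 != 0) `|G c 0|.
Definition abs_min n (G : 'cV[R]_n) : R :=
  \big[Num.min/abs_max G]_(c < n | G c 0 != 0) `|G c 0|.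

End Defs.

(* Main.v *)
Require Import Defs.
From HB Require Import structures.
From mathcomp Require Import all_boot all_order all_algebra.
From mathcomp Require Import zify ring lra.
Import Order.TTheory GRing.Theory Num.Theory.
Local Open Scope ring_scope.

Lemma cyc_offE (N k i : nat) : (k < N)%N -> (i < N)%N ->
  cyc_off N k i = if (k <= i)%N then (i - k)%N else (i + N - k)%N.
Proof.
move=> hk hi; rewrite /cyc_off; case: leqP => h.
  have -> : (i + N - k = (i - k) + N)%N by lia.
  by rewrite modnDr modn_small //; lia.
by rewrite modn_small //; lia.
Qed.

Lemma overlap (N n0 k k' i : nat) : (k < N)%N -> (k' < N)%N -> (i < N)%N ->
  (cyc_off N k i < n0)%N -> (cyc_off N k' i < n0)%N -> in_stripe N n0 k k'.
Proof.
move=> hk hk' hi; rewrite /in_stripe !cyc_offE //.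
case: (leqP k i); case: (leqP k' i); case: (leqP k k'); case: (leqP k' k); lia.
Qed.

Lemma shift_lt (N m1 : nat) (c : 'I_(N * m1)) : (c %/ m1 < N)%N.
Proof.
have := ltn_ord c; move: (nat_of_ord c) => x; clear c.
case: m1 => [|m]; first by rewrite muln0.
by move=> h; rewrite ltn_divLR.
Qed.

Lemma noise (R : rcfType) N m1 n0 (D : 'M[R]_(N, N * m1)) (E : 'cV[R]_N) eps0
  (c : 'I_(N * m1)) :
  conv_dict n0 D -> unit_cols D -> signal_patch_l2inf n0 E <= eps0 ->
  `|\sum_i D i c * E i 0| <= eps0.
Proof.
move=> [h hD] hU hE.
pose P := fun i : 'I_N => (cyc_off N (c %/ m1) i < n0)%N.
have D0 : forall i, ~~ P i -> D i c = 0.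
  by move=> i; rewrite /P hD => /negbTE ->.
set lam := \sum_i D i c * E i 0.
have Hl : lam = \sum_(i | P i) D i c * E i 0.
  rewrite /lam (bigID P) /= [X in _ + X]big1 ?addr0 // => i /D0 ->.
  by rewrite mul0r.
have H1 : \sum_(i | P i) D i c ^+ 2 = 1.
  rewrite -(hU c) [RHS](bigID P) /= [X in _ = _ + X]big1 ?addr0 // => i /D0 ->.
  by rewrite expr2 mul0r.
set T := \sum_(i | P i) E i 0 ^+ 2.
have HT : 0 <= \sum_(i | P i) (E i 0 - lam * D i c) ^+ 2.
  by apply: sumr_ge0 => i _; apply: sqr_ge0.
have Hexp0 : forall l, \sum_(i | P i) (E i 0 - l * D i c) ^+ 2 =
   T - 2 * l * (\sum_(i | P i) D i c * E i 0) + l ^+ 2 * \sum_(i | P i) D i c ^+ 2.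
  move=> l; rewrite /T !mulr_sumr -sumrB -big_split /=; apply: eq_bigr => i _; ring.
have Hexp := Hexp0 lam.
have Hlam2 : lam ^+ 2 <= T.
  rewrite Hexp H1 -Hl in HT.
  have E2 : T - 2 * lam * lam + lam ^+ 2 * 1 = T - lam ^+ 2 by ring.
  by rewrite E2 subr_ge0 in HT.
rewrite -sqrtr_sqr; apply: le_trans (ler_wsqrtr Hlam2) _.
apply: le_trans hE.
rewrite /signal_patch_l2inf.
exact: (le_bigmax 0 (fun j : 'I_N =>
   Num.sqrt (\sum_(i < N | (cyc_off N j i < n0)%N) E i 0 ^+ 2)) (Ordinal (shift_lt N m1 c))).
Qed.

Lemma mu_bound (R : rcfType) n m (D : 'M[R]_(n, m)) (c c' : 'I_m) :
  c' != c -> `|\sum_i D i c * D i c'| <= mutual_coh D.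
Proof.
move=> nc; rewrite /mutual_coh.
apply: le_trans (le_bigmax 0 (fun c => \big[Num.max/0]_(c' < m | c' != c)
     `|\sum_(i < n) D i c * D i c'|) c).
exact: (le_bigmax_cond 0 (fun c' => `|\sum_(i < n) D i c * D i c'|) nc).
Qed.

Lemma mu_ge0 (R : rcfType) n m (D : 'M[R]_(n, m)) : 0 <= mutual_coh D.
Proof. exact: bigmax_ge_id. Qed.

Lemma gmax_bound (R : rcfType) n (G : 'cV[R]_n) c : G c 0 != 0 -> `|G c 0| <= abs_max G.
Proof. move=> h; exact: (le_bigmax_cond 0 (fun c => `|G c 0|) h). Qed.

Lemma gmax_ge0 (R : rcfType) n (G : 'cV[R]_n) : 0 <= abs_max G.
Proof. exact: bigmax_ge_id. Qed.

Lemma gmin_bound (R : rcfType) n (G : 'cV[R]_n) c : G c 0 != 0 -> abs_min G <= `|G c 0|.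
Proof. move=> h; exact: (bigmin_le_cond _ (fun c => `|G c 0|) h). Qed.

Lemma DtY (R : rcfType) N m1 (D : 'M[R]_(N, N * m1)) (G : 'cV[R]_(N * m1))
  (E : 'cV[R]_N) c : unit_cols D ->
  (D^T *m (D *m G + E)) c 0 = G c 0 +
     \sum_(c' | c' != c) (\sum_i D i c * D i c') * G c' 0 + \sum_i D i c * E i 0.
Proof.
move=> hU; rewrite mxE.
transitivity (\sum_i (\sum_c' D i c * D i c' * G c' 0 + D i c * E i 0)).
  apply: eq_bigr => i _; rewrite !mxE mulrDr mulr_sumr; congr (_ + _).
  by apply: eq_bigr => ? _; rewrite mulrA.
rewrite big_split /= exchange_big /=; congr (_ + _).
rewrite (bigD1 c) //=; congr (_ + _); last first.
  by apply: eq_bigr => c' _; rewrite mulr_suml.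
rewrite -mulr_suml.
have -> : \sum_i D i c * D i c = 1.
  by rewrite -(hU c); apply: eq_bigr => i _; rewrite expr2.
by rewrite mul1r.
Qed.

Lemma interf (R : rcfType) N m1 n0 (D : 'M[R]_(N, N * m1)) (G : 'cV[R]_(N * m1)) c :
  conv_dict n0 D ->
  `|\sum_(c' | c' != c) (\sum_i D i c * D i c') * G c' 0| <=
   (#|[set c' | (G c' 0 != 0) && in_stripe N n0 (c %/ m1) (c' %/ m1)] :\ c|)%:R
      * (mutual_coh D * abs_max G).
Proof.
move=> [h hD].
set A := _ :\ c.
set K := mutual_coh D * abs_max G.
have K0 : 0 <= K by apply: mulr_ge0; [exact: mu_ge0 | exact: gmax_ge0].
apply: le_trans (ler_norm_sum _ _ _) _.
have step : forall c', c' != c ->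
   `|(\sum_i D i c * D i c') * G c' 0| <= if c' \in A then K else 0.
  move=> c' nc; rewrite normrM; case: ifP => HA.
    move: HA; rewrite in_setD1 in_set => /andP [_ /andP [Hg _]].
    apply: ler_pM; rewrite ?normr_ge0 //; first exact: mu_bound.
    exact: gmax_bound.
  move: HA; rewrite in_setD1 in_set nc /=.
  case: (eqVneq (G c' 0) 0) => [-> _|_ /= Hs]; first by rewrite normr0 mulr0.
  rewrite big1 ?normr0 ?mul0r // => i _.
  rewrite !hD.
  case: ifP => h1; last by rewrite mul0r.
  case: ifP => h2; last by rewrite mulr0.
  by move: Hs; rewrite (@overlap N n0 _ _ _ (shift_lt N m1 c) (shift_lt N m1 c') (ltn_ord i) h1 h2).
apply: le_trans (ler_sum _ step) _.
apply: le_trans (_ : \sum_c' (if c' \in A then K else 0) <= _).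
  rewrite [X in _ <= X](bigD1 c) //= ler_wpDl //.
  by case: ifP.
by rewrite -big_mkcond sumr_const mulr_natl.
Qed.

Lemma in_stripe_refl N n0 j : (0 < n0)%N -> in_stripe N n0 j j.
Proof. by move=> h; rewrite /in_stripe /cyc_off addKn modnn h. Qed.

Theorem lemma1 (R : rcfType) (N m1 n0 n1 : nat) (D1 : 'M[R]_(N, N * m1))
  (G1 : 'cV[R]_(N * m1)) (E : 'cV[R]_N) (eps0 beta1 : R) :
  (0 < n0)%N -> (n0 <= N)%N ->
  conv_dict n0 D1 -> unit_cols D1 ->
  G1 != 0 ->
  signal_patch_l2inf n0 E <= eps0 ->
  let X := D1 *m G1 in
  let Y := X + E in
  let mu := mutual_coh D1 in
  let gmin := abs_min G1 in
  let gmax := abs_max G1 in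
  let s : R := (stripe_l0inf n0 G1)%:R in
  let G1hat := \col_c hard_thr beta1 ((D1^T *m Y) c 0) in
  s < 2^-1 * (1 + mu^-1 * (gmin / gmax)) - mu^-1 * (eps0 / gmax) ->
  s * mu * gmax + eps0 < beta1 < gmin - (s - 1) * mu * gmax - eps0 ->
  supp G1hat = supp G1 /\
  patch_l2inf n1 (G1 - G1hat)
    <= Num.sqrt (patch_l0inf n1 G1)%:R * (eps0 + mu * (s - 1) * gmax).
Proof.
move=> hn0 hnN hC hU hG hE X Y mu gmin gmax s G1hat _ /andP [hb1 hb2].
set k := stripe_l0inf n0 G1.
have sE : s = k%:R by [].
have e0 : 0 <= eps0 by apply: le_trans hE; exact: bigmax_ge_id.
have mu0 : 0 <= mu by exact: mu_ge0.
have gm0 : 0 <= gmax by exact: gmax_ge0.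
have K0 : 0 <= mu * gmax by apply: mulr_ge0.
pose Dc c := (D1^T *m Y) c 0.
pose Sc (c : 'I_(N * m1)) :=
  [set c' | (G1 c' 0 != 0) && in_stripe N n0 (c %/ m1) (c' %/ m1)].
have kS : forall c, (#|Sc c| <= k)%N.
  move=> c; rewrite /k /stripe_l0inf; exact: (@leq_bigmax _ (fun j : 'I_N => #|[set c0 : 'I_(N * m1) |
     (G1 c0 0 != 0) && in_stripe N n0 j (c0 %/ m1)]|) (Ordinal (shift_lt N m1 c))).
have HD : forall c, Dc c = G1 c 0 +
     \sum_(c' | c' != c) (\sum_i D1 i c * D1 i c') * G1 c' 0 + \sum_i D1 i c * E i 0.
  by move=> c; exact: (@DtY _ _ _ D1 G1 E c hU).
have keyA : forall c, G1 c 0 != 0 ->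
    `|Dc c - G1 c 0| <= (s - 1) * mu * gmax + eps0.
  move=> c hc.
  have I := @interf _ _ _ _ D1 G1 c hC.
  have Nz := @noise _ _ _ _ D1 E eps0 c hC hU hE.
  have cS := cardsD1 c (Sc c).
  have cin : c \in Sc c by rewrite inE hc in_stripe_refl.
  rewrite cin in cS.
  have hk : (#|Sc c :\ c| + 1 <= k)%N by have := kS c; lia.
  have hk' : (#|Sc c :\ c|)%:R + 1 <= s by by rewrite sE -[1]/(1%:R) -natrD ler_nat.
  have I2 := le_trans I (ler_wpM2r K0 (_ : _ <= s - 1)).
  have {}I2 := I2 ltac:(lra).
  rewrite HD.
  set I0 := \sum_(c' | c' != c) _; set N0 := \sum_i _.
  have -> : G1 c 0 + I0 + N0 - G1 c 0 = I0 + N0 by ring.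
  apply: le_trans (ler_normD _ _) _.
  rewrite -mulrA; lra.
have keyB : forall c, G1 c 0 = 0 -> `|Dc c| <= s * mu * gmax + eps0.
  move=> c hc.
  have I := @interf _ _ _ _ D1 G1 c hC.
  have Nz := @noise _ _ _ _ D1 E eps0 c hC hU hE.
  have hk : (#|Sc c :\ c| <= k)%N.
    by apply: leq_trans (kS c); rewrite (cardsD1 c (Sc c)) leq_addl.
  have hk' : (#|Sc c :\ c|)%:R <= s by rewrite sE ler_nat.
  have I2 := le_trans I (ler_wpM2r K0 hk').
  rewrite HD hc add0r.
  apply: le_trans (ler_normD _ _) _.
  rewrite -mulrA; lra.
have b0 : 0 <= beta1.
  have : 0 <= s * mu * gmax by rewrite !mulr_ge0 // sE ler0n.
  lra.
have big : forall c, G1 c 0 != 0 -> beta1 < `|Dc c|.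
  move=> c hc.
  have t := ler_normD (G1 c 0 - Dc c) (Dc c).
  rewrite subrK distrC in t.
  have := keyA c hc; have := @gmin_bound _ _ G1 c hc.
  rewrite -/gmin => h1 h2; lra.
have hatE : forall c, G1hat c 0 = if G1 c 0 != 0 then Dc c else 0.
  move=> c; rewrite /G1hat mxE /hard_thr -/(Dc c).
  case: (eqVneq (G1 c 0) 0) => hc /=.
    by rewrite ltNge (le_trans (keyB c hc) (ltW hb1)).
  by rewrite big.
split.
  apply/setP => c; rewrite !inE hatE.
  case: (eqVneq (G1 c 0) 0) => hc /=; first by rewrite eqxx.
  apply/negP => /eqP h; move: (big c hc); rewrite h normr0 => H; lra.
have [c0 hc0] : exists c, G1 c 0 != 0.
  case: (pickP (fun c => G1 c 0 != 0)) => [c0 h|H]; first by exists c0.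
  move: hG; case/negP; apply/eqP/matrixP => i j; rewrite (ord1 j) mxE.
  by have := H i; rewrite /= => /negbFE /eqP.
have s1 : 1 <= s.
  have cS := cardsD1 c0 (Sc c0).
  have cin : c0 \in Sc c0 by rewrite inE hc0 in_stripe_refl.
  rewrite cin in cS.
  have hk : (1 <= k)%N by have := kS c0; lia.
  by rewrite sE -[1]/(1%:R) ler_nat.
set B := eps0 + mu * (s - 1) * gmax.
have B0 : 0 <= B.
  have : 0 <= mu * (s - 1) * gmax by rewrite !mulr_ge0 // subr_ge0.
  rewrite /B; lra.
have dE : forall c, (G1 - G1hat) c 0 = G1 c 0 - G1hat c 0 by move=> c; rewrite !mxE.
rewrite /patch_l2inf; apply: bigmax_le => [|j _].
  by rewrite mulr_ge0 // sqrtr_ge0.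
pose Q := [set c : 'I_(N * m1) | (G1 c 0 != 0) && (cyc_off N j (c %/ m1) < n1)%N].
have hQ : (#|Q| <= patch_l0inf n1 G1)%N.
  rewrite /patch_l0inf; exact: (@leq_bigmax _ (fun j : 'I_N => #|[set c : 'I_(N * m1) |
     (G1 c 0 != 0) && (cyc_off N j (c %/ m1) < n1)%N]|) j).
have Hsum : \sum_(c < N * m1 | (cyc_off N j (c %/ m1) < n1)%N) (G1 - G1hat) c 0 ^+ 2
    <= #|Q|%:R * B ^+ 2.
  apply: le_trans (_ : \sum_(c < N * m1 | (cyc_off N j (c %/ m1) < n1)%N)
       (if G1 c 0 != 0 then B ^+ 2 else 0) <= _).
    apply: ler_sum => c _; rewrite dE hatE.
    case: (eqVneq (G1 c 0) 0) => hc /=.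
      by rewrite hc subr0 expr2 mul0r.
    have h1 : `|G1 c 0 - Dc c| <= B.
      by rewrite distrC; apply: le_trans (keyA c hc) _; rewrite /B; lra.
    rewrite -real_normK ?num_real // expr2 [B ^+ 2]expr2.
    by apply: ler_pM => //; exact: normr_ge0.
  rewrite -big_mkcondr (eq_bigl (fun c => c \in Q)) => [|c]; last by rewrite inE andbC.
  by rewrite sumr_const mulr_natl.
apply: le_trans (ler_wsqrtr Hsum) _.
rewrite sqrtrM ?ler0n // sqrtr_sqr ger0_norm //.
by apply: (ler_wpM2r B0); apply: ler_wsqrtr; rewrite ler_nat.
Qed.
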